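(* Let $X$ be a real Banach space and $T:X\rightrightarrows X^*$ a monotone operator whose domain $D_T$ is bounded. Consider the conditions: (i) for every $x\in X$ with $x\notin\overline{D_T}$, $\sup\left\{\frac{\langle z^*,x-z\rangle}{\|x-z\|} : (z,z^* )\in G(T)\right\}=\infty$; (ii) $\pi_1\,\mathrm{dom}\,\varphi_T\subset\overline{D_T}$; (iii) $\overline{D_T}=\overline{\mathrm{co}\,D_T}=\overline{\pi_1\,\mathrm{dom}\,\varphi_T}$; (iv) $\overline{D_T}$ is convex. Then (i), (ii), (iii) are equivalent, and each implies (iv). If moreover $T$ is maximal monotone, then all four conditions (i)–(iv) are equivalent.
   Context: $X$ is a real Banach space with topological dual $X^*$ and pairing $\langle x,x^*\rangle$. A (multivalued) operator $T:X\rightrightarrows X^*$ has graph $G(T)=\{(x,x^* ):x^*\in T(x)\}$, domain $D_T=\{x:T(x)\neq\emptyset\}$ and range $R_T=\bigcup_{x}T(x)$. $T$ is monotone if $\langle x^*-y^*,x-y\rangle\ge0$ for all $(x,x^* ),(y,y^* )\in G(T)$; it is maximal monotone if no monotone operator has a graph strictly containing $G(T)$. The Fitzpatrick function of a monotone $T$ is $\varphi_T(x,x^* )=\sup\{\langle x^*-z^*,z-x\rangle:(z,z^* )\in G(T)\}+\langle x^*,x\rangle$, $\mathrm{dom}\,\varphi_T=\{(x,x^* ):\varphi_T(x,x^* )<\infty\}$, and $\pi_1:X\times X^*\to X$, $\pi_2:X\times X^*\to X^*$ are the projections. $\mathrm{co}$ denotes convex hull and bars denote norm closure. *)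

(* Defs.v *)
From Stdlib Require Import Reals.
Open Scope R_scope.
Set Implicit Arguments.

Record Banach := {
  carrier :> Type;
  vzero : carrier;
  vadd : carrier -> carrier -> carrier;
  vopp : carrier -> carrier;
  vscal : R -> carrier -> carrier;
  vnorm : carrier -> R;
  vadd_assoc : forall x y z, vadd x (vadd y z) = vadd (vadd x y) z;
  vadd_comm : forall x y, vadd x y = vadd y x;
  vadd_0l : forall x, vadd vzero x = x;
  vadd_oppr : forall x, vadd x (vopp x) = vzero;
  vscal_1 : forall x, vscal 1 x = x;
  vscal_assoc : forall a b x, vscal a (vscal b x) = vscal (a * b) x;
  vscal_addr : forall a x y, vscal a (vadd x y) = vadd (vscal a x) (vscal a y);
  vscal_addl : forall a b x, vscal (a + b) x = vadd (vscal a x) (vscal b x);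
  vnorm_ge0 : forall x, 0 <= vnorm x;
  vnorm_eq0 : forall x, vnorm x = 0 -> x = vzero;
  vnorm_scal : forall a x, vnorm (vscal a x) = Rabs a * vnorm x;
  vnorm_triangle : forall x y, vnorm (vadd x y) <= vnorm x + vnorm y;
  vcomplete : forall u : nat -> carrier,
    (forall eps, 0 < eps -> exists N, forall m n, (N <= m)%nat -> (N <= n)%nat ->
        vnorm (vadd (u m) (vopp (u n))) < eps) ->
    exists l, forall eps, 0 < eps -> exists N, forall n, (N <= n)%nat ->
        vnorm (vadd (u n) (vopp l)) < eps
}.

Definition vsub {X : Banach} (x y : X) : X := vadd X x (vopp X y).

(* Topological dual: continuous (= bounded) linear functionals.
   The pairing <x, xs> is application  xs x. *)
Record dual (X : Banach) := {
  dfun :> X -> R;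
  dfun_add : forall x y, dfun (vadd X x y) = dfun x + dfun y;
  dfun_scal : forall a x, dfun (vscal X a x) = a * dfun x;
  dfun_bounded : exists C, forall x, Rabs (dfun x) <= C * vnorm X x
}.

(* A multivalued operator T : X ⇉ X^dual, identified with its graph G(T). *)
Definition operator (X : Banach) := X -> dual X -> Prop.

Definition monotone {X : Banach} (T : operator X) : Prop :=
  forall x xs y ys, T x xs -> T y ys ->
    0 <= xs (vsub x y) - ys (vsub x y).

Definition maximal_monotone {X : Banach} (T : operator X) : Prop :=
  monotone T /\
  forall S : operator X, monotone S -> (forall x xs, T x xs -> S x xs) ->
    forall x xs, S x xs -> T x xs.

Definition domain {X : Banach} (T : operator X) : X -> Prop :=
  fun x => exists xs, T x xs.

Definition bounded_set {X : Banach} (A : X -> Prop) : Prop :=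
  exists M, forall x, A x -> vnorm X x <= M.

Definition closure {X : Banach} (A : X -> Prop) : X -> Prop :=
  fun x => forall eps, 0 < eps -> exists y, A y /\ vnorm X (vsub x y) < eps.

Definition convex {X : Banach} (A : X -> Prop) : Prop :=
  forall x y t, A x -> A y -> 0 <= t <= 1 ->
    A (vadd X (vscal X t x) (vscal X (1 - t) y)).

Definition co {X : Banach} (A : X -> Prop) : X -> Prop :=
  fun x => forall C : X -> Prop, convex C -> (forall y, A y -> C y) -> C x.

(* (x,xs) ∈ dom φ_T, i.e. φ_T(x,xs) < +∞, where
   φ_T(x,xs) = sup{<xs-zs, z-x> : (z,zs) ∈ G(T)} + <xs,x>. *)
Definition dom_fitzpatrick {X : Banach} (T : operator X) (x : X) (xs : dual X) : Prop :=
  exists M, forall z zs, T z zs ->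
    (xs (vsub z x) - zs (vsub z x)) + xs x <= M.

Definition pi1_dom_fitzpatrick {X : Banach} (T : operator X) : X -> Prop :=
  fun x => exists xs, dom_fitzpatrick T x xs.

Definition set_eq {X : Banach} (A B : X -> Prop) : Prop := forall x, A x <-> B x.

Definition cond_i {X : Banach} (T : operator X) : Prop :=
  forall x, ~ closure (domain T) x ->
    forall M, exists z zs, T z zs /\ M < zs (vsub x z) / vnorm X (vsub x z).

Definition cond_ii {X : Banach} (T : operator X) : Prop :=
  forall x, pi1_dom_fitzpatrick T x -> closure (domain T) x.

Definition cond_iii {X : Banach} (T : operator X) : Prop :=
  set_eq (closure (domain T)) (closure (co (domain T))) /\
  set_eq (closure (domain T)) (closure (pi1_dom_fitzpatrick T)).

Definition cond_iv {X : Banach} (T : operator X) : Prop :=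
  convex (closure (domain T)).

(* Main.v *)
Require Import Defs.
From Stdlib Require Import Reals Lra Lia Psatz List Classical ClassicalEpsilon FunctionalExtensionality PropExtensionality.
From mathcomp Require classical_sets.
Set Bullet Behavior "Strict Subproofs".
Open Scope R_scope.


Lemma vadd_0r (X : Banach) (x : X) : vadd X x (vzero X) = x.
Proof. rewrite vadd_comm; apply vadd_0l. Qed.

Lemma vadd_cancel (X : Banach) (a b c : X) : vadd X a b = vadd X a c -> b = c.
Proof.
  intros H.
  assert (E : forall y, y = vadd X (vopp X a) (vadd X a y)).
  { intros y. rewrite vadd_assoc, (vadd_comm X (vopp X a) a), vadd_oppr, vadd_0l; reflexivity. }
  rewrite (E b), (E c), H; reflexivity.
Qed.

Lemma vscal_0l (X : Banach) (x : X) : vscal X 0 x = vzero X.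
Proof.
  apply (vadd_cancel X (vscal X 0 x)). rewrite vadd_0r, <- (vscal_addl X 0 0 x).
  now rewrite Rplus_0_l.
Qed.

Lemma vscal_0r (X : Banach) (a : R) : vscal X a (vzero X) = vzero X.
Proof.
  apply (vadd_cancel X (vscal X a (vzero X))). rewrite vadd_0r, <- (vscal_addr X a (vzero X) (vzero X)).
  now rewrite vadd_0l.
Qed.

Lemma vopp_scal (X : Banach) (x : X) : vopp X x = vscal X (-1) x.
Proof.
  apply (vadd_cancel X x). rewrite vadd_oppr.
  rewrite <- (vscal_1 X x) at 1. rewrite <- vscal_addl.
  replace (1 + -1) with 0 by ring. now rewrite vscal_0l.
Qed.

Lemma vadd_swap4 (X : Banach) (a b c d : X) :
  vadd X (vadd X a b) (vadd X c d) = vadd X (vadd X a c) (vadd X b d).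
Proof.
  rewrite !vadd_assoc. f_equal. rewrite <- !vadd_assoc. f_equal. apply vadd_comm.
Qed.

Inductive vexp := VAt (n : nat) | V0 | VAdd (a b : vexp) | VOpp (a : vexp) | VScal (r : R) (a : vexp).

Fixpoint den {X : Banach} (env : list X) (e : vexp) : X :=
  match e with
  | VAt n => nth n env (vzero X)
  | V0 => vzero X
  | VAdd a b => vadd X (den env a) (den env b)
  | VOpp a => vopp X (den env a)
  | VScal r a => vscal X r (den env a)
  end.

Fixpoint coef (e : vexp) (i : nat) : R :=
  match e with
  | VAt n => if Nat.eqb n i then 1 else 0
  | V0 => 0
  | VAdd a b => coef a i + coef b i
  | VOpp a => - coef a i
  | VScal r a => r * coef a i
  end.

Fixpoint lin {X : Banach} (env : list X) (c : nat -> R) (k : nat) : X :=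
  match env with
  | nil => vzero X
  | x :: l => vadd X (vscal X (c k) x) (lin l c (S k))
  end.

Lemma lin_ext (X : Banach) (env : list X) : forall c d k,
  (forall i, c i = d i) -> lin env c k = lin env d k.
Proof.
  induction env as [|x l IH]; intros c d k H; simpl; auto.
  rewrite H, (IH c d); auto.
Qed.

Lemma lin_add (X : Banach) (env : list X) : forall c d k,
  lin env (fun i => c i + d i) k = vadd X (lin env c k) (lin env d k).
Proof.
  induction env as [|x l IH]; intros c d k; simpl.
  - now rewrite vadd_0l.
  - rewrite IH, vscal_addl. apply vadd_swap4.
Qed.

Lemma lin_scal (X : Banach) (env : list X) : forall r c k,
  lin env (fun i => r * c i) k = vscal X r (lin env c k).
Proof.
  induction env as [|x l IH]; intros r c k; simpl.
  - now rewrite vscal_0r.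
  - rewrite IH, vscal_addr, vscal_assoc. reflexivity.
Qed.

Lemma lin_zero (X : Banach) (env : list X) : forall k,
  lin env (fun _ => 0) k = vzero X.
Proof.
  induction env as [|x l IH]; intros k; simpl; auto.
  rewrite IH, vscal_0l, vadd_0l; auto.
Qed.

Lemma lin_at (X : Banach) (env : list X) : forall n k,
  lin env (fun i => if Nat.eqb n i then 1 else 0) k =
  if Nat.leb k n then nth (n - k) env (vzero X) else vzero X.
Proof.
  induction env as [|x l IH]; intros n k; simpl.
  - destruct (Nat.leb k n); auto. destruct (n - k)%nat; auto.
  - rewrite IH. destruct (Nat.eqb_spec n k) as [->|Hne].
    + rewrite vscal_1. rewrite Nat.leb_refl, Nat.sub_diag.
      replace (Nat.leb (S k) k) with false by (symmetry; apply Nat.leb_gt; lia).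
      apply vadd_0r.
    + rewrite vscal_0l, vadd_0l.
      destruct (Nat.leb_spec (S k) n); destruct (Nat.leb_spec k n); try lia; auto.
      replace (n - k)%nat with (S (n - S k)) by lia. reflexivity.
Qed.

Lemma den_lin (X : Banach) (env : list X) (e : vexp) : den env e = lin env (coef e) 0.
Proof.
  induction e; simpl.
  - rewrite lin_at. simpl. now rewrite Nat.sub_0_r.
  - symmetry; apply lin_zero.
  - rewrite IHe1, IHe2, <- lin_add. reflexivity.
  - rewrite IHe, vopp_scal, <- lin_scal. apply lin_ext. intros; ring.
  - rewrite IHe, <- lin_scal. reflexivity.
Qed.

Fixpoint allc (f : nat -> Prop) (l : list nat) : Prop :=
  match l with nil => True | i :: l' => f i /\ allc f l' end.

Lemma lin_ext2 (X : Banach) (env : list X) : forall c d k,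
  allc (fun i => c i = d i) (seq k (length env)) -> lin env c k = lin env d k.
Proof.
  induction env as [|x l IH]; intros c d k H; simpl in *; auto.
  destruct H as [H1 H2]. rewrite H1, (IH c d); auto.
Qed.

Lemma den_eq (X : Banach) (env : list X) (e1 e2 : vexp) :
  allc (fun i => coef e1 i = coef e2 i) (seq 0 (length env)) -> den env e1 = den env e2.
Proof. intros H. rewrite !den_lin. apply lin_ext2; auto. Qed.

Ltac lookup x l :=
  match l with
  | x :: _ => constr:(O)
  | _ :: ?l' => let n := lookup x l' in constr:(S n)
  end.
Ltac reify env t :=
  match t with
  | vzero _ => constr:(V0)
  | vadd _ ?a ?b => let ra := reify env a in let rb := reify env b in constr:(VAdd ra rb)
  | vopp _ ?a => let ra := reify env a in constr:(VOpp ra)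
  | vscal _ ?r ?a => let ra := reify env a in constr:(VScal r ra)
  | vsub ?a ?b => let ra := reify env a in let rb := reify env b in constr:(VAdd ra (VOpp rb))
  | _ => let n := lookup t env in constr:(VAt n)
  end.
Ltac atoms t acc :=
  match t with
  | vzero _ => acc
  | vadd _ ?a ?b => let acc1 := atoms a acc in atoms b acc1
  | vopp _ ?a => atoms a acc
  | vscal _ _ ?a => atoms a acc
  | vsub ?a ?b => let acc1 := atoms a acc in atoms b acc1
  | _ => match acc with
         | context [t] => acc
         | _ => constr:(t :: acc)
         end
  end.
Ltac vcoef := first [ring | (field; lra) | field].
Ltac vring :=
  match goal with |- @eq ?T ?a ?b =>
    let env0 := atoms a (@nil T) in let env := atoms b env0 in
    let ra := reify env a in let rb := reify env b in
    change (den env ra = den env rb); apply den_eq; simpl;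
    repeat split; vcoef
  end.

Lemma test (X : Banach) (x y z : X) (t : R) :
  vsub z (vadd X (vscal X t x) (vscal X (1 - t) y)) =
  vadd X (vscal X t (vsub z x)) (vscal X (1 - t) (vsub z y)).
Proof. vring. Qed.
Lemma test2 (X : Banach) (x : X) (t : R) : t <> 0 ->
  vscal X t (vscal X (1/t) x) = x.
Proof. intros. vring. Qed.

Lemma vnorm_0 (X : Banach) : vnorm X (vzero X) = 0.
Proof. rewrite <- (vscal_0l X (vzero X)), vnorm_scal, Rabs_R0. ring. Qed.

Lemma vnorm_opp (X : Banach) (x : X) : vnorm X (vopp X x) = vnorm X x.
Proof. rewrite vopp_scal, vnorm_scal. replace (Rabs (-1)) with 1 by (unfold Rabs; destruct Rcase_abs; lra). ring. Qed.

Lemma vnorm_sub_sym (X : Banach) (x y : X) : vnorm X (vsub x y) = vnorm X (vsub y x).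
Proof. replace (vsub y x) with (vopp X (vsub x y)) by vring. now rewrite vnorm_opp. Qed.

Lemma vnorm_sub_diag (X : Banach) (x : X) : vnorm X (vsub x x) = 0.
Proof. unfold vsub. rewrite vadd_oppr. apply vnorm_0. Qed.

Lemma vnorm_sub_tri (X : Banach) (x y z : X) :
  vnorm X (vsub x z) <= vnorm X (vsub x y) + vnorm X (vsub y z).
Proof. replace (vsub x z) with (vadd X (vsub x y) (vsub y z)) by vring. apply vnorm_triangle. Qed.

Lemma vnorm_sub_le (X : Banach) (x y : X) : vnorm X (vsub x y) <= vnorm X x + vnorm X y.
Proof. unfold vsub. rewrite <- (vnorm_opp X y). apply vnorm_triangle. Qed.

Lemma dual_0 (X : Banach) (f : dual X) : f (vzero X) = 0.
Proof. rewrite <- (vscal_0l X (vzero X)), dfun_scal. ring. Qed.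

Lemma dual_opp (X : Banach) (f : dual X) x : f (vopp X x) = - f x.
Proof. rewrite vopp_scal, dfun_scal. ring. Qed.

Lemma dual_sub (X : Banach) (f : dual X) x y : f (vsub x y) = f x - f y.
Proof. unfold vsub. rewrite dfun_add, dual_opp. ring. Qed.

Lemma dual_bound (X : Banach) (f : dual X) : exists C, 0 <= C /\ forall x, Rabs (f x) <= C * vnorm X x.
Proof.
  destruct (dfun_bounded f) as [C HC]. exists (Rabs C). split; [apply Rabs_pos|].
  intros x. eapply Rle_trans; [apply HC|]. apply Rmult_le_compat_r; [apply vnorm_ge0| apply RRle_abs].
Qed.

Definition zero_dual (X : Banach) : dual X.
Proof.
  refine {| dfun := fun _ => 0 |}.
  - intros; ring.
  - intros; ring.
  - exists 0. intros x. rewrite Rabs_R0. lra.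
Defined.

Definition dcomb (X : Banach) (f g : dual X) (l : R) : dual X.
Proof.
  refine {| dfun := fun v => f v + l * g v |}.
  - intros. rewrite !dfun_add. ring.
  - intros. rewrite !dfun_scal. ring.
  - destruct (dual_bound X f) as [C1 [H1 H1']]. destruct (dual_bound X g) as [C2 [H2 H2']].
    exists (C1 + Rabs l * C2). intros x.
    eapply Rle_trans; [apply Rabs_triang|]. rewrite Rabs_mult.
    specialize (H1' x). specialize (H2' x).
    assert (0 <= Rabs l) by apply Rabs_pos.
    assert (Rabs l * Rabs (g x) <= Rabs l * (C2 * vnorm X x)) by (apply Rmult_le_compat_l; auto).
    nra.
Defined.

Lemma closure_incl (X : Banach) (A : X -> Prop) x : A x -> closure A x.
Proof. intros H eps Heps. exists x. split; auto. rewrite vnorm_sub_diag; lra. Qed.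

Lemma closure_mono (X : Banach) (A B : X -> Prop) :
  (forall x, A x -> B x) -> forall x, closure A x -> closure B x.
Proof. intros H x Hx eps He. destruct (Hx eps He) as [y [Hy Hn]]. eauto. Qed.

Lemma closure_idem (X : Banach) (A : X -> Prop) x : closure (closure A) x -> closure A x.
Proof.
  intros H eps He. destruct (H (eps/2)) as [y [Hy Hn]]; [lra|].
  destruct (Hy (eps/2)) as [z [Hz Hn2]]; [lra|].
  exists z. split; auto. pose proof (vnorm_sub_tri X x y z). lra.
Qed.

Lemma not_closure (X : Banach) (A : X -> Prop) x : ~ closure A x ->
  exists r, 0 < r /\ forall y, A y -> r <= vnorm X (vsub x y).
Proof.
  intros H. apply NNPP. intros H2. apply H. intros eps He.
  apply NNPP. intros H3. apply H2. exists eps. split; auto.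
  intros y Hy. apply Rnot_lt_le. intros Hlt. apply H3. eauto.
Qed.

Lemma not_closure2 (X : Banach) (A : X -> Prop) x : ~ closure A x ->
  exists r, 0 < r /\ forall y, closure A y -> r <= vnorm X (vsub x y).
Proof.
  intros H. destruct (not_closure X A x H) as [r [Hr Hy]]. exists (r/2). split; [lra|].
  intros y Hc. destruct (Hc (r/2)) as [z [Hz Hn]]; [lra|].
  pose proof (Hy z Hz). pose proof (vnorm_sub_tri X x y z). lra.
Qed.

Lemma convex_closure (X : Banach) (A : X -> Prop) : convex A -> convex (closure A).
Proof.
  intros HA x y t Hx Hy Ht eps He.
  destruct (Hx (eps/2)) as [x' [Hx' Hnx]]; [lra|].
  destruct (Hy (eps/2)) as [y' [Hy' Hny]]; [lra|].
  exists (vadd X (vscal X t x') (vscal X (1 - t) y')). split; [apply HA; auto|].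
  replace (vsub (vadd X (vscal X t x) (vscal X (1 - t) y)) (vadd X (vscal X t x') (vscal X (1 - t) y')))
    with (vadd X (vscal X t (vsub x x')) (vscal X (1-t) (vsub y y'))) by vring.
  eapply Rle_lt_trans; [apply vnorm_triangle|]. rewrite !vnorm_scal.
  rewrite (Rabs_right t) by lra. rewrite (Rabs_right (1 - t)) by lra.
  assert (t * vnorm X (vsub x x') <= t * (eps/2)) by (apply Rmult_le_compat_l; lra).
  assert ((1-t) * vnorm X (vsub y y') <= (1-t) * (eps/2)) by (apply Rmult_le_compat_l; lra).
  nra.
Qed.

Lemma convex_co (X : Banach) (A : X -> Prop) : convex (co A).
Proof. intros x y t Hx Hy Ht C HC HAC. apply HC; [apply Hx|apply Hy|]; auto. Qed.

Lemma incl_co (X : Banach) (A : X -> Prop) x : A x -> co A x.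
Proof. intros H C HC HAC; auto. Qed.

Lemma sub_opp (X : Banach) (x y : X) : vsub x y = vopp X (vsub y x).
Proof. vring. Qed.

Lemma i_ii (X : Banach) (T : operator X) : cond_i T -> cond_ii T.
Proof.
  intros Hi x [xs [M HM]]. apply NNPP; intro Hc.
  destruct (not_closure X _ x Hc) as [r [Hr Hd]].
  destruct (dual_bound X xs) as [C [HC0 HC]].
  destruct (Hi x Hc (Rabs (M - xs x)/r + C)) as [z [zs [Hz Hlt]]].
  assert (Hn := Hd z (ex_intro _ zs Hz)).
  specialize (HM z zs Hz). rewrite (sub_opp X z x), !dual_opp in HM.
  specialize (HC (vsub x z)).
  set (n := vnorm X (vsub x z)) in *. set (a := zs (vsub x z)) in *.
  set (b := xs (vsub x z)) in *. set (K := Rabs (M - xs x)) in *.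
  assert (HK : 0 <= K) by apply Rabs_pos.
  assert (Hb : b <= Rabs b) by apply RRle_abs.
  assert (HK2 : M - xs x <= K) by apply RRle_abs.
  assert (E1 : a / n * n = a) by (field; lra).
  assert (E2 : K / r * r = K) by (field; lra).
  assert (E3 : 0 <= K / r) by (apply Rmult_le_pos; [lra| left; apply Rinv_0_lt_compat; lra]).
  assert (E4 : K / r * r <= K / r * n) by (apply Rmult_le_compat_l; lra).
  set (q := a / n) in *. set (s := K / r) in *.
  nra.
Qed.

Lemma ii_i (X : Banach) (T : operator X) (hbd : bounded_set (domain T)) :
  cond_ii T -> cond_i T.
Proof.
  intros Hii x Hx M. apply NNPP; intro H. apply Hx, Hii.
  destruct (not_closure X _ x Hx) as [r [Hr Hd]].
  exists (zero_dual X). destruct hbd as [Mb HMb].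
  exists (Rabs M * (vnorm X x + Mb)). intros z zs Hz. simpl.
  assert (Hn := Hd z (ex_intro _ zs Hz)).
  assert (Hq : zs (vsub x z) / vnorm X (vsub x z) <= M).
  { apply Rnot_lt_le. intro Hl. apply H. eauto. }
  rewrite (sub_opp X z x), dual_opp.
  assert (Hm : vnorm X (vsub x z) <= vnorm X x + Mb).
  { pose proof (vnorm_sub_le X x z). pose proof (HMb z (ex_intro _ zs Hz)). lra. }
  set (n := vnorm X (vsub x z)) in *. set (a := zs (vsub x z)) in *.
  assert (E1 : a / n * n = a) by (field; lra).
  set (q := a / n) in *.
  assert (HM1 : M <= Rabs M) by apply RRle_abs.
  assert (0 <= Rabs M) by apply Rabs_pos.
  nra.
Qed.

Lemma ii_iii (X : Banach) (T : operator X) (hmon : monotone T)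
  (hbd : bounded_set (domain T)) : cond_ii T -> cond_iii T.
Proof.
  intros Hii.
  set (E := fun x : X => exists K, forall z zs, T z zs -> - zs (vsub z x) <= K).
  assert (HE1 : forall x, E x -> pi1_dom_fitzpatrick T x).
  { intros x [K HK]. exists (zero_dual X). exists K. intros z zs Hz. simpl.
    specialize (HK z zs Hz). lra. }
  destruct hbd as [Mb HMb].
  assert (HE2 : forall x, domain T x -> E x).
  { intros z0 [z0s Hz0]. destruct (dual_bound X z0s) as [C [HC0 HC]].
    exists (C * (Mb + vnorm X z0)). intros z zs Hz.
    specialize (hmon z zs z0 z0s Hz Hz0).
    specialize (HC (vsub z z0)).
    pose proof (vnorm_sub_le X z z0). pose proof (HMb z (ex_intro _ zs Hz)).
    assert (C * vnorm X (vsub z z0) <= C * (Mb + vnorm X z0)) by (apply Rmult_le_compat_l; lra).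
    pose proof (Rle_abs (z0s (vsub z z0))). pose proof (Rabs_pos (z0s (vsub z z0))).
    pose proof (RRle_abs (- z0s (vsub z z0))). rewrite Rabs_Ropp in *. lra. }
  assert (HE3 : convex E).
  { intros x y t [Kx Hx] [Ky Hy] Ht. exists (t * Kx + (1 - t) * Ky).
    intros z zs Hz.
    replace (vsub z (vadd X (vscal X t x) (vscal X (1 - t) y)))
      with (vadd X (vscal X t (vsub z x)) (vscal X (1 - t) (vsub z y))) by vring.
    rewrite dfun_add, !dfun_scal.
    specialize (Hx z zs Hz). specialize (Hy z zs Hz).
    assert (t * (- zs (vsub z x)) <= t * Kx) by (apply Rmult_le_compat_l; lra).
    assert ((1-t) * (- zs (vsub z y)) <= (1-t) * Ky) by (apply Rmult_le_compat_l; lra).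
    lra. }
  assert (H1 : forall x, closure (domain T) x -> closure (co (domain T)) x).
  { apply closure_mono. apply incl_co. }
  assert (H2 : forall x, closure (co (domain T)) x -> closure (pi1_dom_fitzpatrick T) x).
  { apply closure_mono. intros x Hx. apply HE1. apply Hx; auto. }
  assert (H3 : forall x, closure (pi1_dom_fitzpatrick T) x -> closure (domain T) x).
  { intros x Hx. apply closure_idem. revert Hx. apply closure_mono. exact Hii. }
  split; intros x; split; auto.
Qed.

Lemma iii_ii (X : Banach) (T : operator X) : cond_iii T -> cond_ii T.
Proof.
  intros [_ H] x Hx. apply H. apply closure_incl; auto.
Qed.

Lemma iii_iv (X : Banach) (T : operator X) : cond_iii T -> cond_iv T.
Proof.
  intros [H _] x y t Hx Hy Ht. apply H.
  apply convex_closure; [apply convex_co| apply H; auto | apply H; auto | auto].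
Qed.

Lemma zorn_sets (T : Type) (P : (T -> Prop) -> Prop) :
  (forall F : (T -> Prop) -> Prop, (forall A, F A -> P A) ->
     (forall A B, F A -> F B -> (forall x, A x -> B x) \/ (forall x, B x -> A x)) ->
     P (fun x => exists A, F A /\ A x)) ->
  exists A, P A /\ forall B, (forall x, A x -> B x) -> (exists x, B x /\ ~ A x) -> ~ P B.
Proof.
  intros H.
  destruct (@classical_sets.Zorn_bigcup T P) as [A [HA Hmax]].
  - intros F HF Htot.
    assert (E : classical_sets.bigcup F (fun X => X) = (fun x => exists A, F A /\ A x)).
    { unfold classical_sets.bigcup, classical_sets.mkset.
      apply functional_extensionality. intros x. apply propositional_extensionality.
      split; [intros [i Hi Hx]; eauto | intros [i [Hi Hx]]; econstructor; eauto]. }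
    rewrite E. apply H; [exact HF|]. intros A B HA HB. exact (Htot A B HA HB).
  - exists A. split; auto. intros B HAB [x [HBx HAx]] HB.
    apply (Hmax B); auto. split; [exact HAB|]. intros Hs. apply HAx, Hs, HBx.
Qed.

Lemma hahn_banach (X : Banach) (p : X -> R) (K : R) (y0 : X)
  (Hsub : forall v w, p (vadd X v w) <= p v + p w)
  (Hhom : forall l v, 0 < l -> p (vscal X l v) = l * p v)
  (Hbd : forall v, p v <= K * vnorm X v) :
  exists F : dual X, (forall v, F v <= p v) /\ F y0 = p y0.
Proof.
  assert (p0 : p (vzero X) = 0).
  { pose proof (Hhom 2 (vzero X)). rewrite vscal_0r in H. lra. }
  assert (pneg : forall t y, t * p y <= p (vscal X t y)).
  { intros t y. destruct (Rtotal_order t 0) as [Hn|[H0|Hp]].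
    - pose proof (Hsub (vscal X t y) (vscal X (-t) y)).
      replace (vadd X (vscal X t y) (vscal X (-t) y)) with (vzero X) in H by vring.
      rewrite (Hhom (-t)) in H by lra. lra.
    - subst. rewrite vscal_0l, p0. lra.
    - rewrite Hhom by lra. lra. }
  set (Good := fun G : (X * R)%type -> Prop =>
    (forall v a w b, G (v,a) -> G (w,b) -> G (vadd X v w, a + b)) /\
    (forall l v a, G (v,a) -> G (vscal X l v, l * a)) /\
    (forall v a, G (v,a) -> a <= p v)).
  set (P := fun G : (X * R)%type -> Prop => Good G /\ (forall u, G u -> G (y0, p y0))).
  destruct (zorn_sets (X * R)%type P) as [A [[[Gadd [Gscal Gdom]] HA2] Hmax]].
  { intros F HF Htot. split; [split; [|split]|].
    - intros v a w b [A1 [F1 H1]] [A2 [F2 H2]].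
      destruct (Htot A1 A2 F1 F2) as [S|S].
      + exists A2. split; auto. apply (proj1 (proj1 (HF A2 F2))); auto.
      + exists A1. split; auto. apply (proj1 (proj1 (HF A1 F1))); auto.
    - intros l v a [A1 [F1 H1]]. exists A1. split; auto.
      apply (proj1 (proj2 (proj1 (HF A1 F1)))); auto.
    - intros v a [A1 [F1 H1]]. exact (proj2 (proj2 (proj1 (HF A1 F1))) v a H1).
    - intros u [A1 [F1 H1]]. exists A1. split; auto. apply (proj2 (HF A1 F1) u); auto. }
  assert (S1 : A (y0, p y0)).
  { apply NNPP; intro Hn.
    set (L := fun u : (X * R)%type => exists t, u = (vscal X t y0, t * p y0)).
    apply (Hmax L).
    - intros u Hu. exfalso; apply Hn; exact (HA2 u Hu).
    - exists (y0, p y0). split; auto. exists 1. rewrite vscal_1. f_equal; ring.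
    - split; [split; [|split]|].
      + intros v a w b [t Ht] [t' Ht']. injection Ht as -> ->. injection Ht' as -> ->.
        exists (t + t'). rewrite vscal_addl. f_equal; ring.
      + intros l v a [t Ht]. injection Ht as -> ->. exists (l * t). rewrite vscal_assoc. f_equal; ring.
      + intros v a [t Ht]. injection Ht as -> ->. apply pneg.
      + intros u _. exists 1. rewrite vscal_1. f_equal; ring. }
  assert (S2 : A (vzero X, 0)).
  { pose proof (Gscal 0 y0 (p y0) S1). rewrite vscal_0l, Rmult_0_l in H. exact H. }
  assert (Htot : forall v1, exists a, A (v1, a)).
  { intros v1. apply NNPP; intro Hn.
    set (E := fun s => exists w b, A (w,b) /\ s = b - p (vsub w v1)).
    assert (key : forall w b w' b', A (w,b) -> A (w',b') -> b' - p (vsub w' v1) <= p (vadd X w v1) - b).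
    { intros w b w' b' H H'. pose proof (Gdom _ _ (Gadd _ _ _ _ H H')).
      pose proof (Hsub (vadd X w v1) (vsub w' v1)).
      replace (vadd X (vadd X w v1) (vsub w' v1)) with (vadd X w w') in H1 by vring. lra. }
    destruct (completeness E) as [c [Hc1 Hc2]].
    { exists (p (vadd X (vzero X) v1) - 0). intros s [w [b [H ->]]]. apply key; auto. }
    { exists (0 - p (vsub (vzero X) v1)). exists (vzero X), 0. auto. }
    assert (Hge : forall w b, A (w,b) -> b - p (vsub w v1) <= c).
    { intros w b H. apply Hc1. exists w, b. auto. }
    assert (Hle : forall w b, A (w,b) -> c <= p (vadd X w v1) - b).
    { intros w b H. apply Hc2. intros s [w' [b' [H' ->]]]. apply key; auto. }
    set (B := fun u : (X * R)%type => exists w b t, A (w,b) /\ u = (vadd X w (vscal X t v1), b + t * c)).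
    apply (Hmax B).
    - intros [w b] H. exists w, b, 0. split; auto. f_equal; [vring | ring].
    - exists (v1, c). split.
      + exists (vzero X), 0, 1. split; auto. f_equal; [vring | ring].
      + intro H. apply Hn. eauto.
    - split; [split; [|split]|].
      + intros v a w b [w1 [b1 [t1 [H1 E1]]]] [w2 [b2 [t2 [H2 E2]]]].
        injection E1 as -> ->. injection E2 as -> ->.
        exists (vadd X w1 w2), (b1 + b2), (t1 + t2). split; [apply Gadd; auto|].
        f_equal; [vring | ring].
      + intros l v a [w1 [b1 [t1 [H1 E1]]]]. injection E1 as -> ->.
        exists (vscal X l w1), (l * b1), (l * t1). split; [apply Gscal; auto|].
        f_equal; [vring | ring].
      + intros v a [w [b [t [H E1]]]]. injection E1 as -> ->.
        destruct (Rtotal_order t 0) as [Hneg|[H0|Hpos]].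
        * set (s := - t).
          pose proof (Hge _ _ (Gscal (1/s) _ _ H)) as Hg.
          replace (vadd X w (vscal X t v1)) with (vscal X s (vsub (vscal X (1/s) w) v1))
            by (unfold s; vring).
          rewrite Hhom by (unfold s; lra).
          assert (Hs : 0 < s) by (unfold s; lra).
          assert (s * (1 / s * b - p (vsub (vscal X (1 / s) w) v1)) <= s * c)
            by (apply Rmult_le_compat_l; lra).
          assert (E2 : s * (1 / s * b) = b) by (field; lra).
          unfold s in *. lra.
        * subst. rewrite vscal_0l, vadd_0r. rewrite Rmult_0_l, Rplus_0_r. apply Gdom; auto.
        * pose proof (Hle _ _ (Gscal (1/t) _ _ H)) as Hg.
          replace (vadd X w (vscal X t v1)) with (vscal X t (vadd X (vscal X (1/t) w) v1))
            by vring.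
          rewrite Hhom by lra.
          assert (t * c <= t * (p (vadd X (vscal X (1 / t) w) v1) - 1 / t * b))
            by (apply Rmult_le_compat_l; lra).
          assert (E2 : t * (1 / t * b) = b) by (field; lra).
          lra.
      + intros u _. exists y0, (p y0), 0. split; auto. f_equal; [vring | ring]. }
  assert (uniq : forall v a b, A (v,a) -> A (v,b) -> a = b).
  { intros v a b Ha Hb.
    assert (H3 : A (vzero X, a + -1 * b)).
    { replace (vzero X) with (vadd X v (vscal X (-1) v)) by vring. apply Gadd; auto. }
    pose proof (Gdom _ _ H3). pose proof (Gdom _ _ (Gscal (-1) _ _ H3)).
    rewrite vscal_0r in H0. lra. }
  set (fv := fun v => proj1_sig (constructive_indefinite_description _ (Htot v))).
  assert (HF : forall v, A (v, fv v)).
  { intros v. unfold fv. destruct (constructive_indefinite_description _ (Htot v)); auto. }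
  assert (Hadd : forall x y, fv (vadd X x y) = fv x + fv y).
  { intros x y. apply (uniq (vadd X x y)); auto. }
  assert (Hscal : forall l x, fv (vscal X l x) = l * fv x).
  { intros l x. apply (uniq (vscal X l x)); auto. }
  assert (Hbnd : exists C, forall x, Rabs (fv x) <= C * vnorm X x).
  { exists K. intros x. pose proof (Gdom _ _ (HF x)).
    pose proof (Hbd x). pose proof (Gdom _ _ (HF (vscal X (-1) x))).
    rewrite Hscal in H1. pose proof (Hbd (vscal X (-1) x)).
    rewrite vnorm_scal in H2. replace (Rabs (-1)) with 1 in H2 by (unfold Rabs; destruct Rcase_abs; lra).
    unfold Rabs; destruct Rcase_abs; lra. }
  exists {| dfun := fv; dfun_add := Hadd; dfun_scal := Hscal; dfun_bounded := Hbnd |}.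
  simpl. split.
  - intros v. apply Gdom; auto.
  - apply (uniq y0); auto.
Qed.

Lemma frac01 (a b : R) : 0 <= a -> 0 < b -> a <= b -> 0 <= a / b <= 1.
Proof.
  intros Ha Hb Hab. unfold Rdiv.
  assert (0 < / b) by (apply Rinv_0_lt_compat; lra).
  assert (b * / b = 1) by (field; lra). split; nra.
Qed.

Lemma separation (X : Banach) (C : X -> Prop) (x2 c0 : X) (rho : R)
  (HC : convex C) (Hc0 : C c0) (Hr : 0 < rho)
  (Hd : forall c, C c -> rho <= vnorm X (vsub x2 c)) :
  exists F : dual X, (forall c, C c -> F (vsub c x2) <= 0) /\ 0 < F (vsub x2 c0).
Proof.
  set (Q := fun v => exists mu c, 0 <= mu /\ C c /\ v = vscal X mu (vsub c x2)).
  assert (Q0 : Q (vzero X)).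
  { exists 0, c0. split; [lra|]. split; auto. rewrite vscal_0l; auto. }
  assert (Qadd : forall q1 q2, Q q1 -> Q q2 -> Q (vadd X q1 q2)).
  { intros q1 q2 [mu [c [Hmu [Hc ->]]]] [nu [c' [Hnu [Hc' ->]]]].
    destruct (Req_dec (mu + nu) 0) as [Hz|Hz].
    - assert (mu = 0) by lra. assert (nu = 0) by lra. subst.
      exists 0, c. split; [lra|]. split; auto. vring.
    - exists (mu + nu), (vadd X (vscal X (mu / (mu + nu)) c) (vscal X (1 - mu / (mu + nu)) c')).
      split; [lra|]. split.
      + apply HC; auto. apply frac01; lra.
      + vring. }
  assert (Qscal : forall l q, 0 <= l -> Q q -> Q (vscal X l q)).
  { intros l q Hl [mu [c [Hmu [Hc ->]]]]. exists (l * mu), c. split; [nra|]. split; auto.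
    apply vscal_assoc. }
  set (Ev := fun v a => exists q, Q q /\ a = - vnorm X (vsub v q)).
  assert (bnd : forall v, bound (Ev v)).
  { intros v. exists 0. intros a [q [_ ->]]. pose proof (vnorm_ge0 X (vsub v q)). lra. }
  assert (ne : forall v, exists a, Ev v a).
  { intros v. exists (- vnorm X (vsub v (vzero X))). exists (vzero X). auto. }
  set (p := fun v => - proj1_sig (completeness (Ev v) (bnd v) (ne v))).
  assert (P1 : forall v q, Q q -> p v <= vnorm X (vsub v q)).
  { intros v q Hq. unfold p. destruct (completeness (Ev v) (bnd v) (ne v)) as [m [Hm1 Hm2]].
    simpl. assert (- vnorm X (vsub v q) <= m) by (apply Hm1; exists q; auto). lra. }
  assert (P2 : forall v b, (forall q, Q q -> b <= vnorm X (vsub v q)) -> b <= p v).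
  { intros v b Hb. unfold p. destruct (completeness (Ev v) (bnd v) (ne v)) as [m [Hm1 Hm2]].
    simpl. assert (m <= - b). { apply Hm2. intros a [q [Hq ->]]. pose proof (Hb q Hq). lra. }
    lra. }
  assert (Hsub : forall v w, p (vadd X v w) <= p v + p w).
  { intros v w.
    assert (H1 : forall q1 q2, Q q1 -> Q q2 -> p (vadd X v w) <= vnorm X (vsub v q1) + vnorm X (vsub w q2)).
    { intros q1 q2 Hq1 Hq2. eapply Rle_trans; [apply (P1 _ (vadd X q1 q2)); auto|].
      replace (vsub (vadd X v w) (vadd X q1 q2)) with (vadd X (vsub v q1) (vsub w q2)) by vring.
      apply vnorm_triangle. }
    assert (H2 : forall q2, Q q2 -> p (vadd X v w) - vnorm X (vsub w q2) <= p v).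
    { intros q2 Hq2. apply P2. intros q1 Hq1. pose proof (H1 q1 q2 Hq1 Hq2). lra. }
    assert (H3 : p (vadd X v w) - p v <= p w).
    { apply P2. intros q2 Hq2. pose proof (H2 q2 Hq2). lra. }
    lra. }
  assert (Hhom : forall l v, 0 < l -> p (vscal X l v) = l * p v).
  { intros l v Hl. apply Rle_antisym.
    - assert (p (vscal X l v) / l <= p v).
      { apply P2. intros q Hq. pose proof (P1 (vscal X l v) (vscal X l q) (Qscal l q ltac:(lra) Hq)).
        replace (vsub (vscal X l v) (vscal X l q)) with (vscal X l (vsub v q)) in H by vring.
        rewrite vnorm_scal, Rabs_right in H by lra.
        apply (Rmult_le_reg_l l); [lra|]. replace (l * (p (vscal X l v) / l)) with (p (vscal X l v)) by (field; lra).
        lra. }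
      replace (p (vscal X l v)) with (l * (p (vscal X l v) / l)) by (field; lra).
      apply Rmult_le_compat_l; lra.
    - apply P2. intros q Hq.
      pose proof (P1 v (vscal X (1/l) q) (Qscal (1/l) q ltac:(apply Rlt_le, Rdiv_lt_0_compat; lra) Hq)).
      replace (vsub v (vscal X (1 / l) q)) with (vscal X (1/l) (vsub (vscal X l v) q)) in H by vring.
      rewrite vnorm_scal, Rabs_right in H by (apply Rle_ge, Rlt_le, Rdiv_lt_0_compat; lra).
      apply (Rmult_le_compat_l l) in H; [|lra].
      replace (l * (1 / l * vnorm X (vsub (vscal X l v) q))) with (vnorm X (vsub (vscal X l v) q)) in H by (field; lra).
      lra. }
  assert (Hbd : forall v, p v <= 1 * vnorm X v).
  { intros v. pose proof (P1 v (vzero X) Q0).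
    replace (vsub v (vzero X)) with v in H by vring. lra. }
  destruct (hahn_banach X p 1 (vsub x2 c0) Hsub Hhom Hbd) as [F [HF1 HF2]].
  exists F. split.
  - intros c Hc. eapply Rle_trans; [apply HF1|].
    pose proof (P1 (vsub c x2) (vsub c x2)).
    rewrite vnorm_sub_diag in H. apply H. exists 1, c. split; [lra|]. split; auto.
    symmetry; apply vscal_1.
  - rewrite HF2. apply Rlt_le_trans with rho; auto. apply P2.
    intros q [mu [c [Hmu [Hc ->]]]].
    set (z := vadd X (vscal X (1 / (1 + mu)) c0) (vscal X (1 - 1 / (1 + mu)) c)).
    assert (Hz : C z).
    { apply HC; auto. apply frac01; lra. }
    replace (vsub (vsub x2 c0) (vscal X mu (vsub c x2))) with (vscal X (1 + mu) (vsub x2 z))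
      by (unfold z; vring).
    rewrite vnorm_scal, Rabs_right by lra.
    pose proof (Hd z Hz). pose proof (vnorm_ge0 X (vsub x2 z)). nra.
Qed.

Lemma iv_ii (X : Banach) (T : operator X) (hmax : maximal_monotone T) :
  cond_iv T -> cond_ii T.
Proof.
  intros Hiv x [xs [M HM]]. apply NNPP; intro Hc.
  destruct (not_closure2 X _ x Hc) as [r [Hr Hd]].
  assert (Hsep : exists (w : dual X) delta, 0 < delta /\ forall z, domain T z -> delta <= w (vsub x z)).
  { destruct (classic (exists c0, domain T c0)) as [[c0 Hc0]|Hne].
    - set (n0 := vnorm X (vsub x c0)).
      assert (Hn0 : r <= n0) by (apply Hd, closure_incl; auto).
      set (s := r / (4 * n0)).
      assert (Hs : 0 < s) by (apply Rdiv_lt_0_compat; lra).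
      assert (Hsn : s * n0 = r / 4) by (unfold s; field; lra).
      assert (Hs1 : s <= 1/4).
      { unfold s. apply (Rmult_le_reg_r (4 * n0)); [lra|].
        replace (r / (4 * n0) * (4 * n0)) with r by (field; lra). lra. }
      set (x2 := vadd X x (vscal X s (vsub c0 x))).
      assert (E1 : vsub x x2 = vscal X s (vsub x c0)) by (unfold x2; vring).
      assert (E2 : vsub x2 c0 = vscal X (1 - s) (vsub x c0)) by (unfold x2; vring).
      assert (Hdist : forall c, closure (domain T) c -> r / 2 <= vnorm X (vsub x2 c)).
      { intros c Hcc. pose proof (Hd c Hcc). pose proof (vnorm_sub_tri X x x2 c).
        rewrite E1, vnorm_scal, Rabs_right in H0 by lra. fold n0 in H0. lra. }
      destruct (separation X (closure (domain T)) x2 c0 (r/2) Hiv (closure_incl X _ _ Hc0)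
                  ltac:(lra) Hdist) as [F [HF1 HF2]].
      rewrite E2, dfun_scal in HF2.
      assert (Hpos : 0 < F (vsub x c0)) by nra.
      exists F, (s * F (vsub x c0)). split; [nra|].
      intros z Hz.
      replace (vsub x z) with (vadd X (vsub x x2) (vsub x2 z)) by vring.
      rewrite dfun_add, E1, dfun_scal.
      pose proof (HF1 z (closure_incl X _ _ Hz)).
      rewrite (sub_opp X z x2), dual_opp in H. lra.
    - exists (zero_dual X), 1. split; [lra|]. intros z Hz; exfalso; eauto. }
  destruct Hsep as [w [delta [Hdel Hw]]].
  set (lam := Rmax 0 ((M - xs x) / delta)).
  assert (Hl0 : 0 <= lam) by apply Rmax_l.
  assert (Hl1 : M - xs x <= lam * delta).
  { assert ((M - xs x) / delta <= lam) by apply Rmax_r.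
    replace (M - xs x) with ((M - xs x) / delta * delta) by (field; lra).
    apply Rmult_le_compat_r; lra. }
  set (xs' := dcomb X xs w lam).
  assert (rel : forall z zs, T z zs -> 0 <= xs' (vsub x z) - zs (vsub x z)).
  { intros z zs Hz. unfold xs'. simpl.
    specialize (HM z zs Hz). rewrite (sub_opp X z x), !dual_opp in HM.
    assert (Hwz := Hw z (ex_intro _ zs Hz)).
    assert (lam * delta <= lam * w (vsub x z)) by (apply Rmult_le_compat_l; lra).
    lra. }
  destruct hmax as [hmon hmaxS].
  set (S := fun (a : X) (as_ : dual X) => T a as_ \/ (a = x /\ as_ = xs')).
  assert (Smon : monotone S).
  { intros a as_ b bs [Ha|[-> ->]] [Hb|[-> ->]].
    - apply hmon; auto.
    - rewrite (sub_opp X a x), !dual_opp. pose proof (rel a as_ Ha). lra.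
    - apply rel; auto.
    - lra. }
  assert (HT : T x xs').
  { apply (hmaxS S Smon).
    - intros a as_ H; left; auto.
    - right; auto. }
  apply Hc. apply closure_incl. exists xs'. auto.
Qed.

Theorem theorem1p3 (X : Banach) (T : operator X)
  (hmon : monotone T) (hbd : bounded_set (domain T)) :
  (cond_i T <-> cond_ii T) /\ (cond_ii T <-> cond_iii T) /\
  (cond_i T -> cond_iv T) /\ (cond_ii T -> cond_iv T) /\ (cond_iii T -> cond_iv T) /\
  (maximal_monotone T ->
     (cond_i T <-> cond_iv T) /\ (cond_ii T <-> cond_iv T) /\ (cond_iii T <-> cond_iv T)).
Proof.
  pose proof (i_ii X T) as A1. pose proof (ii_i X T hbd) as A2.
  pose proof (ii_iii X T hmon hbd) as A3. pose proof (iii_ii X T) as A4.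
  pose proof (iii_iv X T) as A5.
  split; [tauto|]. split; [tauto|]. split; [tauto|]. split; [tauto|]. split; [tauto|].
  intros hmax. pose proof (iv_ii X T hmax) as A6. tauto.
Qed.
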